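(* Let $\Gamma=(V,E)$ be a graph of order $n$, minimum degree $\delta$ and maximum degree $\Delta$, and let $\bar{\Gamma}=(V,\bar E)$ be its complement. Let $k$ be an integer. (a) Every dominating set $S\subseteq V$ in $\bar{\Gamma}$ with $|S|\ge\left\lceil\frac{n+k+\Delta-1}{2}\right\rceil$ is a global offensive $k$-alliance in $\bar{\Gamma}$. (b) Every dominating set $S\subseteq V$ in $\Gamma$ with $|S|\ge\left\lceil\frac{2n+k-\delta-2}{2}\right\rceil$ is a global offensive $k$-alliance in $\Gamma$.
   Context: Graphs are finite and simple. In a graph $G$, for $S\subseteq V$ and $v\in V$, $\delta_S(v)$ is the number of neighbours of $v$ in $S$, $\overline{S}=V\setminus S$, and $\partial(S)$ the set of vertices of $\overline{S}$ with a neighbour in $S$. A nonempty $S$ is an offensive $k$-alliance in $G$ if $\delta_S(v)\ge\delta_{\overline{S}}(v)+k$ for all $v\in\partial(S)$, and a global offensive $k$-alliance if moreover it is dominating in $G$. *)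

(* Defs.v *)
From mathcomp Require Import all_boot all_order all_algebra.
Set Implicit Arguments. Unset Strict Implicit. Unset Printing Implicit Defensive.
Import Order.TTheory GRing.Theory Num.Theory.

Definition simple_graph (T : finType) (e : rel T) : Prop :=
  symmetric e /\ irreflexive e.

Definition compl_rel (T : finType) (e : rel T) : rel T :=
  fun x y => (x != y) && ~~ e x y.

Definition ndeg (T : finType) (e : rel T) (S : {set T}) (v : T) : nat :=
  #|[set u in S | e v u]|.

Definition deg (T : finType) (e : rel T) (v : T) : nat := ndeg e [set: T] v.

Definition maxdeg (T : finType) (e : rel T) : nat := \max_(v : T) deg e v.
(* minimum degree; the seed #|T| is never attained strictly below for n > 0 *)
Definition mindeg (T : finType) (e : rel T) : nat :=
  \big[minn/#|T|]_(v : T) deg e v.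

Definition boundary (T : finType) (e : rel T) (S : {set T}) : {set T} :=
  [set v in ~: S | [exists u in S, e v u]].

Definition dominating (T : finType) (e : rel T) (S : {set T}) : Prop :=
  forall v, v \notin S -> exists2 u, u \in S & e v u.

Definition offensive_alliance (T : finType) (e : rel T) (k : int)
  (S : {set T}) : Prop :=
  S != set0 /\
  forall v, v \in boundary e S ->
    ((ndeg e S v)%:Z >= (ndeg e (~: S) v)%:Z + k)%R.

Definition global_offensive_alliance (T : finType) (e : rel T) (k : int)
  (S : {set T}) : Prop :=
  offensive_alliance e k S /\ dominating e S.

(* ceiling of m/2 for an integer m *)
Definition ceil_half (m : int) : int := ((m + 1) %/ 2)%Z.

(* Main.v *)
Require Import Defs.
From mathcomp Require Import all_boot all_order all_algebra zify.
Import Order.TTheory GRing.Theory Num.Theory.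
Set Implicit Arguments. Unset Strict Implicit.

Lemma card_sum (T : finType) (A : {set T}) (P : pred T) :
  #|[set u in A | P u]| = \sum_(u in A) (P u : nat).
Proof.
rewrite -sum1_card big_mkcond /= [RHS]big_mkcond /=.
apply: eq_bigr => u _; rewrite !inE; by case: (u \in A); case: (P u).
Qed.

Lemma ceil_half_ge (m : int) : (m <= 2 * ceil_half m)%R.
Proof.
rewrite /ceil_half.
have h := divz_eq (m + 1) 2.
have h1 : (0 <= ((m+1)%R %% 2)%Z)%R by apply: modz_ge0.
have h2 : (((m+1)%R %% 2)%Z < 2)%R by apply: ltz_pmod.
lia.
Qed.

Lemma ndeg_split (T : finType) (e : rel T) (A : {set T}) v :
  ndeg e A v + ndeg e (~: A) v = deg e v.
Proof.
rewrite /deg /ndeg !card_sum [RHS](bigID (mem A)) /=.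
congr (_ + _); apply: eq_bigl => u; rewrite !inE //.
Qed.

Lemma mem_card (T : finType) (A : {set T}) v :
  (v \in A : nat) = #|[set u in A | u == v]|.
Proof.
case: (boolP (v \in A)) => h.
  have -> : [set u in A | u == v] = [set v].
    by apply/setP => u; rewrite !inE; case: eqP => [->|]; rewrite ?h ?andbF.
  by rewrite cards1.
have -> : [set u in A | u == v] = set0.
  by apply/setP => u; rewrite !inE; case: eqP => [->|]; rewrite ?(negbTE h) ?andbF.
by rewrite cards0.
Qed.

Lemma ndeg_compl (T : finType) (e : rel T) (A : {set T}) v :
  irreflexive e ->
  ndeg (compl_rel e) A v + ndeg e A v + (v \in A) = #|A|.
Proof.
move=> irr; rewrite mem_card /ndeg !card_sum -big_split -big_split /=.
rewrite -sum1_card; apply: eq_bigr => u _ /=.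
rewrite /compl_rel eq_sym; case: eqP => [->|_]; first by rewrite irr.
by case: (e v u).
Qed.

Lemma deg_le_max (T : finType) (e : rel T) v : deg e v <= maxdeg e.
Proof. exact: (leq_bigmax v). Qed.

Lemma min_le_deg (T : finType) (e : rel T) v : mindeg e <= deg e v.
Proof.
rewrite /mindeg; have : v \in index_enum T by rewrite mem_index_enum.
elim: (index_enum T) => // a s IH; rewrite big_cons inE => /orP [/eqP <-|vs].
  exact: geq_minl.
exact: leq_trans (geq_minr _ _) (IH vs).
Qed.

Lemma nonempty (T : finType) (e : rel T) (S : {set T}) :
  0 < #|T| -> dominating e S -> S != set0.
Proof.
move=> /card_gt0P [x _] dom; apply/negP => /eqP S0.
have hx : x \notin S by rewrite S0 inE.
have [u] := dom x hx; by rewrite S0 inE.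
Qed.

Theorem mainTheorem10 (T : finType) (e : rel T) (k : int) :
  simple_graph e -> 0 < #|T| ->
  (forall S : {set T}, dominating (compl_rel e) S ->
     ((#|S|%:Z >= ceil_half (#|T|%:Z + k + (maxdeg e)%:Z - 1))%R) ->
     global_offensive_alliance (compl_rel e) k S) /\
  (forall S : {set T}, dominating e S ->
     ((#|S|%:Z >= ceil_half (2 * #|T|%:Z + k - (mindeg e)%:Z - 2))%R) ->
     global_offensive_alliance e k S).
Proof.
move=> [sym irr] n0; split => S dom hS; (split; last exact: dom);
  (split; first exact: nonempty n0 dom) => v;
  rewrite inE inE => /andP [vS _].
- have h1 := ndeg_compl S v irr; have h2 := ndeg_compl (~: S) v irr.
  have h3 := ndeg_split e S v; have h4 := deg_le_max e v.
  have h5 := cardsC S; have h7 : (#|S| <= #|T|)%N by apply: max_card. have h6 := ceil_half_ge (#|T|%:Z + k + (maxdeg e)%:Z - 1).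
  rewrite (negbTE vS) /= in h1; rewrite inE vS /= in h2.
  lia.
- have h2 := ndeg_compl (~: S) v irr.
  have h3 := ndeg_split e S v; have h4 := min_le_deg e v.
  have h5 := cardsC S; have h7 : (#|S| <= #|T|)%N by apply: max_card. have h6 := ceil_half_ge (2 * #|T|%:Z + k - (mindeg e)%:Z - 2).
  rewrite inE vS /= in h2.
  lia.
Qed.
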